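(* As formal power series in $z$ (with coefficients rational functions of $q,s$), $$\sum_{n\ge0}\frac{r_{2n}(s,q)}{(q^2;q^2)_n}z^n=\frac{e_{q^2}(s^2z)\,e_{q^2}(z)}{e_q(-sz)},\qquad \sum_{n\ge0}\frac{r_{2n+1}(s,q)}{(q^2;q^2)_n}z^n=(1+s)\frac{e_{q^2}(s^2z)\,e_{q^2}(z)}{e_q(-qsz)}.$$
   Context: $q$ is an indeterminate (or a real number with $|q|<1$). $(x;q)_n=\prod_{j=0}^{n-1}(1-q^jx)$. The Gaussian binomial coefficient is $\begin{bmatrix} n\\ j\end{bmatrix}_q=\frac{(q;q)_n}{(q;q)_j(q;q)_{n-j}}$ for $0\le j\le n$ and $0$ otherwise. The Rogers–Szegö polynomials are $r_n(s,q)=\sum_{j=0}^n\begin{bmatrix} n\\ j\end{bmatrix}_q s^j$. $e_q(w)=\sum_{n\ge0}\frac{w^n}{(q;q)_n}$ as a formal power series, and $1/e_q(w)$ denotes its formal reciprocal. *)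

(* Defs.v *)
From HB Require Import structures.
From mathcomp Require Import all_boot all_order all_algebra.
Set Implicit Arguments. Unset Strict Implicit. Unset Printing Implicit Defensive.
Import GRing.Theory.
Local Open Scope ring_scope.

Definition qpoch (K : fieldType) (x q : K) (n : nat) : K :=
  \prod_(j < n) (1 - q ^+ j * x).

Definition qbinom (K : fieldType) (q : K) (n j : nat) : K :=
  if (j <= n)%N then qpoch q q n / (qpoch q q j * qpoch q q (n - j)) else 0.

Definition rogers_szego (K : fieldType) (s q : K) (n : nat) : K :=
  \sum_(j < n.+1) qbinom q n j * s ^+ j.

Definition fps (K : fieldType) := nat -> K.

Definition fps_mul (K : fieldType) (f g : fps K) : fps K :=
  fun n => \sum_(i < n.+1) f i * g (n - i)%N.

(* formal reciprocal of f (meaningful when f 0 != 0):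
   g 0 = f0^-1, g n = - f0^-1 * sum_{k=1}^n f k * g (n-k).
   inv_list f n is the list [g 0; ...; g n]. *)
Fixpoint fps_inv_list (K : fieldType) (f : fps K) (n : nat) : seq K :=
  match n with
  | 0 => [:: (f 0%N)^-1]
  | n'.+1 =>
      let s := fps_inv_list f n' in
      rcons s (- (f 0%N)^-1 *
               \sum_(k < n'.+1) f k.+1 * nth 0 s (n' - k)%N)
  end.

Definition fps_inv (K : fieldType) (f : fps K) : fps K :=
  fun n => nth 0 (fps_inv_list f n) n.

(* e_q(a z) = sum_n a^n z^n / (q;q)_n, as a series in z *)
Definition eq_exp (K : fieldType) (q a : K) : fps K :=
  fun n => a ^+ n / qpoch q q n.

(* Main.v *)
Require Import Defs.
From HB Require Import structures.
From mathcomp Require Import all_boot all_order all_algebra.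
From mathcomp Require Import ring zify.
Import GRing.Theory.
Local Open Scope ring_scope.

Section S.
Variables (K : fieldType) (q s : K).
Hypothesis hq : forall n : nat, qpoch q q n != 0.

Lemma qpochS (x Q : K) n : qpoch x Q n.+1 = qpoch x Q n * (1 - Q ^+ n * x).
Proof. by rewrite /qpoch big_ord_recr. Qed.

Lemma qpoch0 (x Q : K) : qpoch x Q 0 = 1.
Proof. by rewrite /qpoch big_ord0. Qed.

Lemma fac_neq0 m : 1 - q ^+ m.+1 != 0.
Proof.
have := hq m.+1; rewrite qpochS mulf_eq0 negb_or => /andP[_].
by rewrite -exprSr.
Qed.

Lemma qpoch2_neq0 n : qpoch (q ^+ 2) (q ^+ 2) n != 0.
Proof.
rewrite /qpoch; apply/prodf_neq0 => i _.
by rewrite -exprM -exprD mulnC addn2 fac_neq0.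
Qed.

Definition P n := qpoch q q n.

Lemma qbinom_lt n k : (n < k)%N -> qbinom q n k = 0.
Proof. by move=> h; rewrite /qbinom leqNgt h. Qed.

Lemma qbinomE n k : (k <= n)%N -> qbinom q n k = P n / (P k * P (n - k)).
Proof. by rewrite /qbinom => ->. Qed.

Lemma qbinom_n0 n : qbinom q n 0 = 1.
Proof. rewrite qbinomE // subn0 /P qpoch0 mul1r divff //. Qed.

Lemma qbinom_nn n : qbinom q n n = 1.
Proof. rewrite qbinomE // subnn /P qpoch0 mulr1 divff //. Qed.

Lemma pascal n k : (k <= n)%N ->
  qbinom q n.+1 k.+1 = qbinom q n k.+1 + q ^+ (n - k) * qbinom q n k.
Proof.
move=> kn; have [->|lt] := eqVneq k n.
  by rewrite qbinom_nn qbinom_lt // qbinom_nn subnn expr0 mulr1 add0r.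
have [t ht] : exists t, n = (k + t.+1)%N by exists (n - k - 1)%N; lia.
subst n.
rewrite !qbinomE //; last lia.
have -> : (k + t.+1 - k.+1 = t)%N by lia.
have -> : (k + t.+1 - k = t.+1)%N by lia.
have -> : ((k + t.+1).+1 - k.+1 = t.+1)%N by lia.
rewrite /P !qpochS.
have := fac_neq0 k; have := fac_neq0 t; have := fac_neq0 (k + t.+1).
have := hq k; have := hq t; have := hq (k+t.+1).
rewrite -!exprSr.
have -> : q ^+ (k + t.+1).+1 = q ^+ k.+1 * q ^+ t.+1 by rewrite -exprD; congr (_ ^+ _); lia.
move=> h1 h2 h3 h4 h5 h6.
by field; rewrite h5 h2 h3 h6.
Qed.

Lemma qbI2 m k : (k <= m.+1)%N ->
  (1 - q ^+ (m.+1 - k)) * qbinom q m.+1 k = (1 - q ^+ m.+1) * qbinom q m k.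
Proof.
move=> km; have [->|ne] := eqVneq k m.+1.
  by rewrite subnn expr0 subrr mul0r qbinom_lt // mulr0.
have [t ht] : exists t, m = (k + t)%N by exists (m - k)%N; lia.
subst m.
rewrite !qbinomE //; last lia.
have -> : ((k + t).+1 - k = t.+1)%N by lia.
have -> : ((k + t) - k = t)%N by lia.
rewrite /P !qpochS -!exprSr.
have := hq k; have := hq t; have := hq (k+t); have := fac_neq0 t.
move=> h1 h2 h3 h4.
by field; rewrite h3 h4 h1.
Qed.

Definition r n := rogers_szego s q n.
Definition Ssum n := \sum_(k < n.+1) q ^+ (n - k) * qbinom q n k * s ^+ k.

Lemma r_ext n : r n = \sum_(k < n.+2) qbinom q n k * s ^+ k.
Proof. by rewrite /r /rogers_szego [RHS]big_ord_recr /= qbinom_lt // mul0r addr0. Qed.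

Lemma stepA n : r n.+1 = r n + s * Ssum n.
Proof.
rewrite {1}/r /rogers_szego big_ord_recl /= qbinom_n0 expr0 mul1r.
rewrite (eq_bigr (fun k : 'I_n.+1 => qbinom q n k.+1 * s ^+ k.+1 + q ^+ (n - k) * qbinom q n k * s ^+ k.+1)); last first.
  move=> k _; rewrite /bump /=.
  have hk : (k <= n)%N by rewrite -ltnS.
  by rewrite add1n pascal // mulrDl.
rewrite big_split /= addrA (r_ext n) [in RHS]big_ord_recl /= qbinom_n0 expr0 mul1r.
congr (_ + _); rewrite /Ssum mulr_sumr; apply: eq_bigr => k _.
rewrite exprS; ring.
Qed.

Lemma stepB m : Ssum m.+1 = r m.+1 - (1 - q ^+ m.+1) * r m.
Proof.
rewrite /Ssum (r_ext m) /r /rogers_szego mulr_sumr -sumrB.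
apply: eq_bigr => k _.
have hk : (k <= m.+1)%N by rewrite -ltnS.
have h := @qbI2 m k hk.
have -> : q ^+ (m.+1 - k) * qbinom q m.+1 k =
   qbinom q m.+1 k - (1 - q ^+ (m.+1 - k)) * qbinom q m.+1 k by ring.
rewrite h; ring.
Qed.

Lemma r0 : r 0 = 1.
Proof. by rewrite /r /rogers_szego big_ord1 qbinom_n0 expr0 mulr1. Qed.

Lemma r1 : r 1 = 1 + s.
Proof.
rewrite stepA r0 /Ssum big_ord1 /= qbinom_n0 !expr0 !mulr1 //.
Qed.

Lemma rT n : r n.+2 = (1 + s) * r n.+1 - s * (1 - q ^+ n.+1) * r n.
Proof. rewrite stepA stepB; ring. Qed.


Definition Q2 := q ^+ 2.
Definition alpha (d k : nat) := 1 + s ^+ 2 + s * (1 + q) * q ^+ d * Q2 ^+ k.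
Definition Rec (d : nat) (X : nat -> K) :=
  (1 - Q2) * X 1%N = alpha d 0 * X 0%N /\
  forall k, (1 - Q2 ^+ k.+2) * X k.+2 =
     alpha d k.+1 * X k.+1 - s ^+ 2 * (1 - q ^+ (2 * d).+1 * Q2 ^+ k) * X k.

Lemma r4 m : r m.+4 = (1 + s ^+ 2 + s * (q ^+ m.+2 + q ^+ m.+3)) * r m.+2
   - s ^+ 2 * (1 - q ^+ m.+2) * (1 - q ^+ m.+1) * r m.
Proof.
rewrite (rT m.+2) (rT m.+1).
rewrite (rT m) !exprS; ring.
Qed.

Definition Lseq (d n : nat) := r (n.*2 + d) / qpoch Q2 Q2 n.

Lemma qpochQ2S k : qpoch Q2 Q2 k.+1 = qpoch Q2 Q2 k * (1 - Q2 ^+ k.+1).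
Proof. by rewrite qpochS exprSr. Qed.

Lemma Q2fac k : 1 - Q2 ^+ k.+1 != 0.
Proof. have := qpoch2_neq0 k.+1; rewrite -/Q2 qpochQ2S mulf_eq0 negb_or => /andP[]//. Qed.

Lemma qexp k d j : q ^+ (k.*2 + d + j) = Q2 ^+ k * q ^+ d * q ^+ j.
Proof. by rewrite !exprD -muln2 mulnC exprM. Qed.

Lemma L_rec d : (d < 2)%N -> Rec d (Lseq d).
Proof.
move=> hd; split.
  rewrite /Lseq /= qpochQ2S /qpoch big_ord0 mul1r expr1 /alpha expr0 mulr1.
  have h1 := Q2fac 0; rewrite expr1 in h1.
  have -> : (1.*2 + d = d.+2)%N by rewrite add2n.
  have -> : (0.*2 + d = d)%N by [].
  case: d hd => [|[|//]] _ /=.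
    by rewrite /Q2 in h1 *; rewrite (rT 0) r1 r0; field; rewrite oner_eq0 h1.
  by rewrite /Q2 in h1 *; rewrite (rT 1) (rT 0) r1 r0; field; rewrite oner_eq0 h1.
move=> k.
rewrite /Lseq.
have -> : ((k.+2).*2 + d = (k.*2 + d).+4)%N by rewrite !doubleS; lia.
have -> : ((k.+1).*2 + d = (k.*2 + d).+2)%N by rewrite !doubleS; lia.
rewrite r4 !qpochQ2S.
have h0 := qpoch2_neq0 k; rewrite -/Q2 in h0.
have h1 := Q2fac k; have h2 := Q2fac k.+1.
have e : q ^+ (k.*2 + d) = Q2 ^+ k * q ^+ d by rewrite exprD -muln2 mulnC exprM.
rewrite /alpha !exprS e.
move: h1 h2; rewrite !exprS => h1 h2.
move: h0 h1 h2 e; set Qk := Q2 ^+ k; set R2 := r _.+2; set R0 := r _.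
rewrite /Q2 => h0 h1 h2 _.
case: d hd R2 R0 => [|[|//]] _ /=; rewrite ?expr0 ?expr1 ?mulr1 ?muln0 ?muln1.
  by move=> R2 R0; field; rewrite h0 h1 h2.
by move=> R2 R0; field; rewrite h0 h1 h2.
Qed.

Definition Pn (N : nat) (f : nat -> K) : {poly K} := \poly_(i < N) f i.
Definition eqm (N : nat) (p r : {poly K}) := forall k, (k < N)%N -> p`_k = r`_k.
Definition sc (c : K) (p : {poly K}) := p \Po (c *: 'X).
Definition lf (a : K) : {poly K} := 1 + a *: 'X.

Lemma coef_sc c p n : (sc c p)`_n = c ^+ n * p`_n.
Proof.
rewrite /sc coef_comp_poly.
under eq_bigr => i _ do rewrite exprZn coefZ coefXn.
have [lt|ge] := ltnP n (size p).
  rewrite (bigD1 (Ordinal lt)) //= eqxx mulr1 big1 ?addr0; first by rewrite mulrC.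
  move=> i /eqP ne.
  have -> : (n == i) = false by apply/negbTE/eqP => h; apply: ne; apply: val_inj.
  by rewrite !mulr0.
rewrite nth_default // mulr0 big1 // => i _.
have -> : (n == i) = false by apply/negbTE; rewrite neq_ltn (leq_trans (ltn_ord i) ge) orbT.
by rewrite !mulr0.
Qed.

Lemma sc_mul c p r : sc c (p * r) = sc c p * sc c r.
Proof. exact: comp_polyM. Qed.

Lemma sc1 c : sc c 1 = 1.
Proof. by rewrite /sc -polyC1 comp_polyC. Qed.

Lemma sc_lf c a : sc c (lf a) = lf (a * c).
Proof. by rewrite /sc /lf comp_polyD -polyC1 comp_polyC comp_polyZ comp_polyX scalerA. Qed.

Lemma sc_sc c c' p : sc c (sc c' p) = sc (c' * c) p.
Proof. by apply/polyP => i; rewrite !coef_sc mulrA [c ^+ i * _]mulrC exprMn. Qed.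

Lemma coef_lf0 a p : (lf a * p)`_0 = p`_0.
Proof. by rewrite /lf mulrDl mul1r -scalerAl coefD coefZ coefXM /= mulr0 addr0. Qed.

Lemma coef_lfS a p k : (lf a * p)`_k.+1 = p`_k.+1 + a * p`_k.
Proof. by rewrite /lf mulrDl mul1r -scalerAl coefD coefZ coefXM. Qed.

Lemma eqm_mull N p r t : eqm N p r -> eqm N (t * p) (t * r).
Proof.
move=> h k hk; rewrite !coefM; apply: eq_bigr => i _; rewrite h //.
by rewrite (leq_ltn_trans (leq_subr _ _) hk).
Qed.

Lemma eqm_mulr N p r t : eqm N p r -> eqm N (p * t) (r * t).
Proof. by move=> h; rewrite ![_ * t]mulrC; apply: eqm_mull. Qed.

Lemma eqm_trans N p r t : eqm N p r -> eqm N r t -> eqm N p t.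
Proof. by move=> h1 h2 k hk; rewrite h1 // h2. Qed.

Lemma eqm_sym N p r : eqm N p r -> eqm N r p.
Proof. by move=> h k hk; rewrite h. Qed.

Lemma eqm_sc N c p r : eqm N p r -> eqm N (sc c p) (sc c r).
Proof. by move=> h k hk; rewrite !coef_sc h. Qed.

Lemma coefPn N f k : (k < N)%N -> (Pn N f)`_k = f k.
Proof. by move=> hk; rewrite coef_poly hk. Qed.

Lemma fmulE N f g n : (n < N)%N -> fps_mul f g n = (Pn N f * Pn N g)`_n.
Proof.
move=> hn; rewrite coefM /fps_mul; apply: eq_bigr => i _.
have hi : (i < N)%N by rewrite (leq_ltn_trans _ hn) // -ltnS.
by rewrite !coefPn // (leq_ltn_trans (leq_subr _ _) hn).
Qed.

Lemma Pmul N f g : eqm N (Pn N (fps_mul f g)) (Pn N f * Pn N g).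
Proof. by move=> k hk; rewrite coefPn // (@fmulE N f g k hk). Qed.

Lemma eqm_eq N p r : p = r -> eqm N p r.
Proof. by move=> ->. Qed.

Lemma inv_size (f : fps K) n : size (fps_inv_list f n) = n.+1.
Proof. by elim: n => [|n IH] //=; rewrite size_rcons IH. Qed.

Lemma inv_nth (f : fps K) n j : (j <= n)%N -> nth 0 (fps_inv_list f n) j = fps_inv f j.
Proof.
elim: n j => [|n IH] j hj; first by case: j hj.
rewrite /= nth_rcons inv_size.
have [lt|ge] := ltnP j n.+1; first by rewrite IH.
have -> : j = n.+1 by apply/eqP; rewrite eqn_leq hj ge.
by rewrite eqxx /fps_inv /= nth_rcons inv_size ltnn eqxx.
Qed.

Lemma invS (f : fps K) n : fps_inv f n.+1 =
  - (f 0%N)^-1 * \sum_(k < n.+1) f k.+1 * fps_inv f (n - k)%N.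
Proof.
rewrite {1}/fps_inv /= nth_rcons inv_size ltnn eqxx; congr (_ * _).
by apply: eq_bigr => k _; rewrite inv_nth // leq_subr.
Qed.

Lemma inv_mul (f : fps K) n : f 0%N != 0 -> fps_mul f (fps_inv f) n = (n == 0)%:R.
Proof.
move=> h; case: n => [|n].
  by rewrite /fps_mul big_ord1 /= /fps_inv /= divff.
rewrite /fps_mul big_ord_recl subn0 invS.
rewrite (eq_bigr (fun i : 'I_n.+1 => f i.+1 * fps_inv f (n - i)%N)); last first.
  by move=> i _; rewrite /bump /= ?add1n ?subSS.
by rewrite mulrA mulrN divff // mulN1r addNr.
Qed.

Lemma eqm_inv N (f : fps K) : f 0%N != 0 -> eqm N (Pn N f * Pn N (fps_inv f)) 1.
Proof. by move=> h k hk; rewrite -fmulE // inv_mul // coef1. Qed.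

Lemma eqexp_sc N Q a : (forall k, qpoch Q Q k != 0) ->
  eqm N (sc Q (Pn N (eq_exp Q a))) (lf (- a) * Pn N (eq_exp Q a)).
Proof.
move=> hQ [|k] hk.
  by rewrite coef_sc coef_lf0 expr0 mul1r.
rewrite coef_sc coef_lfS !coefPn ?(ltnW hk) // /eq_exp qpochS.
have := hQ k.+1; rewrite qpochS mulf_eq0 negb_or => /andP[h1 h2].
rewrite !exprS; field; by rewrite h1 h2.
Qed.

Lemma RG N c (A B E : fps K) a1 b1 (C : {poly K}) :
  E 0%N != 0 ->
  eqm N (sc c (Pn N A)) (lf a1 * Pn N A) ->
  eqm N (sc c (Pn N B)) (lf b1 * Pn N B) ->
  eqm N (sc c (Pn N E)) (C * Pn N E) ->
  eqm N (C * sc c (Pn N (fps_mul (fps_mul A B) (fps_inv E))))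
        (lf a1 * (lf b1 * Pn N (fps_mul (fps_mul A B) (fps_inv E)))).
Proof.
move=> hE ha hb he.
set R := fps_mul _ _.
set a := Pn N A; set b := Pn N B; set e := Pn N E; set i := Pn N (fps_inv E).
have hR : eqm N (Pn N R) (a * b * i).
  apply: eqm_trans (Pmul _ _ _) _; apply: eqm_mulr; exact: Pmul.
have hI : eqm N (e * i) 1 by apply: eqm_inv.
have s1 : eqm N (C * sc c i) i.
  apply: (@eqm_trans _ _ (C * sc c i * (e * i))).
    rewrite -{1}[C * sc c i]mulr1; apply: eqm_mull; exact: eqm_sym.
  apply: (@eqm_trans _ _ (sc c i * (C * e) * i)); first by apply: eqm_eq; ring.
  apply: (@eqm_trans _ _ (sc c i * sc c e * i)).
    by apply: eqm_mulr; apply: eqm_mull; apply: eqm_sym.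
  rewrite -sc_mul [i * e]mulrC.
  apply: (@eqm_trans _ _ (sc c 1 * i)); last by rewrite sc1 mul1r.
  by apply: eqm_mulr; apply: eqm_sc.
apply: (@eqm_trans _ _ (C * sc c (a * b * i))).
  by apply: eqm_mull; apply: eqm_sc.
rewrite !sc_mul.
apply: (@eqm_trans _ _ (sc c a * sc c b * (C * sc c i))); first by apply: eqm_eq; ring.
apply: (@eqm_trans _ _ ((lf a1 * a) * (lf b1 * b) * i)).
  apply: (@eqm_trans _ _ (sc c a * sc c b * i)); first by apply: eqm_mull.
  apply: eqm_mulr; apply: (@eqm_trans _ _ (lf a1 * a * sc c b)); first by apply: eqm_mulr.
  by apply: eqm_mull.
apply: (@eqm_trans _ _ (lf a1 * (lf b1 * (a * b * i)))); first by apply: eqm_eq; ring.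
by apply: eqm_mull; apply: eqm_mull; apply: eqm_sym.
Qed.

Lemma extract2 N (X : nat -> K) al be al' be' k :
  eqm N (lf al * (lf be * sc Q2 (Pn N X))) (lf al' * (lf be' * Pn N X)) ->
  (k.+2 < N)%N ->
  Q2 ^+ k.+2 * X k.+2 + be * (Q2 ^+ k.+1 * X k.+1)
    + al * (Q2 ^+ k.+1 * X k.+1 + be * (Q2 ^+ k * X k))
  = X k.+2 + be' * X k.+1 + al' * (X k.+1 + be' * X k).
Proof.
move=> h hk; have := h _ hk.
have hk1 : (k.+1 < N)%N by apply: ltnW.
have hk0 : (k < N)%N by apply: ltnW.
by rewrite !coef_lfS !coef_sc !coefPn.
Qed.

Lemma extract1 N (X : nat -> K) al be al' be' :
  eqm N (lf al * (lf be * sc Q2 (Pn N X))) (lf al' * (lf be' * Pn N X)) ->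
  (1 < N)%N ->
  Q2 * X 1%N + be * X 0%N + al * X 0%N = X 1%N + be' * X 0%N + al' * X 0%N.
Proof.
move=> h hk; have := h _ hk.
have hk0 : (0 < N)%N by apply: ltnW.
by rewrite !coef_lfS !coef_lf0 !coef_sc !coefPn // expr1 expr0 mul1r.
Qed.

Lemma lin_trick (x y u v : K) : x = y -> u - v = y - x -> u = v.
Proof. by move=> -> h; apply/eqP; rewrite -subr_eq0 h subrr. Qed.


Definition Aser := eq_exp Q2 (s ^+ 2).
Definition Bser := eq_exp Q2 1.
Definition Rseq (E : fps K) := fps_mul (fps_mul Aser Bser) (fps_inv E).

Lemma E_sc2 N b : eqm N (sc Q2 (Pn N (eq_exp q (- b))))
   ((lf (b * q) * lf b) * Pn N (eq_exp q (- b))).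
Proof.
have h := @eqexp_sc N q (- b) hq; rewrite opprK in h.
rewrite /Q2 expr2 -sc_sc.
apply: (@eqm_trans _ _ (sc q (lf b * Pn N (eq_exp q (- b))))); first exact: eqm_sc.
rewrite sc_mul sc_lf -mulrA; exact: eqm_mull.
Qed.

Lemma eqexp0 (Q a : K) : eq_exp Q a 0%N = 1.
Proof. by rewrite /eq_exp expr0 qpoch0 divr1. Qed.

Lemma Rpoly N b : eqm N (lf (b * q) * (lf b * sc Q2 (Pn N (Rseq (eq_exp q (- b))))))
   (lf (- s ^+ 2) * (lf (-1) * Pn N (Rseq (eq_exp q (- b))))).
Proof.
rewrite mulrA; apply: RG.
- by rewrite eqexp0 oner_neq0.
- exact: eqexp_sc qpoch2_neq0.
- exact: eqexp_sc qpoch2_neq0.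
- exact: E_sc2.
Qed.

Lemma R0 E : Rseq E 0%N = (E 0%N)^-1.
Proof.
by rewrite /Rseq /fps_mul !big_ord1 /= /Aser /Bser !eqexp0 !mul1r /fps_inv.
Qed.

Lemma Rrec0 : Rec 0 (Rseq (eq_exp q (- s))).
Proof.
split.
  have H := @extract1 2 _ _ _ _ _ (Rpoly 2 s) (ltnSn 1).
  eapply lin_trick; [exact H|]; rewrite /alpha !expr0; ring.
move=> k.
have H := @extract2 k.+3 _ _ _ _ _ k (Rpoly k.+3 s) (ltnSn _).
eapply lin_trick; [exact H|]; rewrite /alpha muln0 !exprS !expr0; ring.
Qed.

Lemma Rrec1 : Rec 1 (Rseq (eq_exp q (- (q * s)))).
Proof.
split.
  have H := @extract1 2 _ _ _ _ _ (Rpoly 2 (q * s)) (ltnSn 1).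
  eapply lin_trick; [exact H|]; rewrite /alpha !expr0 expr1; ring.
move=> k.
have H := @extract2 k.+3 _ _ _ _ _ k (Rpoly k.+3 (q * s)) (ltnSn _).
eapply lin_trick; [exact H|]; rewrite /alpha muln1 !exprS !expr0; ring.
Qed.

Lemma Rec_uniq d X Y : Rec d X -> Rec d Y -> X 0%N = Y 0%N -> forall n, X n = Y n.
Proof.
move=> [hx1 hx2] [hy1 hy2] h0.
have h1 : X 1%N = Y 1%N.
  have nz : 1 - Q2 != 0 by have := Q2fac 0; rewrite expr1.
  by apply: (mulfI nz); rewrite hx1 hy1 h0.
suff : forall n, X n = Y n /\ X n.+1 = Y n.+1 by move=> H n; case: (H n).
elim=> [|n [IH1 IH2]]; first by split.
split => //.
by apply: (mulfI (Q2fac n.+1)); rewrite hx2 hy2 IH1 IH2.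
Qed.

Lemma Rec_scale d c X : Rec d X -> Rec d (fun n => c * X n).
Proof.
move=> [h1 h2]; split; first by rewrite mulrCA h1 mulrCA.
by move=> k; rewrite mulrCA h2; ring.
Qed.

End S.

Theorem lemma1p2 (K : fieldType) (q s : K)
  (hq : forall n : nat, qpoch q q n != 0) :
  (forall n : nat,
     rogers_szego s q (2 * n) / qpoch (q ^+ 2) (q ^+ 2) n =
     fps_mul (fps_mul (eq_exp (q ^+ 2) (s ^+ 2)) (eq_exp (q ^+ 2) 1))
             (fps_inv (eq_exp q (- s))) n) /\
  (forall n : nat,
     rogers_szego s q (2 * n).+1 / qpoch (q ^+ 2) (q ^+ 2) n =
     (1 + s) * fps_mul (fps_mul (eq_exp (q ^+ 2) (s ^+ 2)) (eq_exp (q ^+ 2) 1))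
             (fps_inv (eq_exp q (- (q * s)))) n).
Proof.
split=> n.
  have H := @Rec_uniq K q s hq 0 _ _ (@L_rec K q s hq 0 (ltn0Sn 1)) (@Rrec0 K q s hq).
  have h0 : Lseq K q s 0 0 = Rseq K q s (eq_exp q (- s)) 0%N.
    by rewrite R0 eqexp0 invr1 /Lseq /= qpoch0 divr1 (@r0 K q s hq).
  move: (H h0 n); rewrite /Lseq /Rseq /Aser /Bser /Q2 /r addn0 -mul2n.
  by move=> e; exact: e.
have H := @Rec_uniq K q s hq 1 _ _ (@L_rec K q s hq 1 (ltnSn 1))
   (@Rec_scale K q s 1 (1 + s) _ (@Rrec1 K q s hq)).
have h0 : Lseq K q s 1 0 = (1 + s) * Rseq K q s (eq_exp q (- (q * s))) 0%N.
  by rewrite R0 eqexp0 invr1 mulr1 /Lseq /= qpoch0 divr1 (@r1 K q s hq).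
move: (H h0 n); rewrite /Lseq /Rseq /Aser /Bser /Q2 /r addn1 -mul2n.
by move=> e; exact: e.
Qed.
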